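(* The regular tensor product $\mathfrak{S}_A\widehat{\otimes}\mathfrak{S}_B$ is a sub Inf semi-lattice of the maximal tensor product $\check{S}_{AB}$, and $\mathfrak{S}_A\widetilde{\otimes}\mathfrak{S}_B\subseteq\mathfrak{S}_A\widehat{\otimes}\mathfrak{S}_B$.
   Context: $\mathfrak{B}=\{\mathbf{Y},\mathbf{N},\bot\}$ with $\bot$ below the incomparable $\mathbf{Y},\mathbf{N}$, meet $\wedge$, involution $\overline{\cdot}$ and product $\bullet$ ($x\bullet\mathbf{Y}=x$, $x\bullet\mathbf{N}=\mathbf{N}$, $\bot\bullet\bot=\bot$). $(\mathfrak{S}_A,\mathfrak{E}_A,\epsilon^{\mathfrak{S}_A})$, $(\mathfrak{S}_B,\mathfrak{E}_B,\epsilon^{\mathfrak{S}_B})$ are States/Effects Chu spaces (effects with negation $\overline{\mathfrak{l}}$, constant-$\mathbf{Y}$ effect $\mathfrak{Y}_{\mathfrak{E}}$, bottom effect $\bot_{\mathfrak{E}}$). $\check{S}_{AB}$ is the set of maps $\Phi:\mathfrak{E}_A\times\mathfrak{E}_B\to\mathfrak{B}$ preserving arbitrary infima in each variable with $\Phi(\overline{\mathfrak{l}_A},\mathfrak{Y}_{\mathfrak{E}_B})=\overline{\Phi(\mathfrak{l}_A,\mathfrak{Y}_{\mathfrak{E}_B})}$, $\Phi(\mathfrak{Y}_{\mathfrak{E}_A},\overline{\mathfrak{l}_B})=\overline{\Phi(\mathfrak{Y}_{\mathfrak{E}_A},\mathfrak{l}_B)}$, $\Phi(\mathfrak{Y}_{\mathfrak{E}_A},\mathfrak{Y}_{\mathfrak{E}_B})=\mathbf{Y}$,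 ordered pointwise. $\mathfrak{S}_A\widetilde{\otimes}\mathfrak{S}_B$ is its subset of maps $(\mathfrak{l}_A,\mathfrak{l}_B)\mapsto\bigwedge_{i}\epsilon_{\mathfrak{l}_A}(\sigma_{i,A})\bullet\epsilon_{\mathfrak{l}_B}(\sigma_{i,B})$. $\mathfrak{S}_A\widehat{\otimes}\mathfrak{S}_B$ is the set of $\Phi\in\check{S}_{AB}$ such that: $\Phi(\mathfrak{l}_A,\overline{\mathfrak{Y}_{\mathfrak{E}_B}})=\Phi(\overline{\mathfrak{Y}_{\mathfrak{E}_A}},\mathfrak{l}_B)=\mathbf{N}$ for all $\mathfrak{l}_A,\mathfrak{l}_B$; if $\Phi(\mathfrak{l}_A,\mathfrak{Y}_{\mathfrak{E}_B})=\mathbf{Y}$ then $(\Phi(\mathfrak{l}_A,\mathfrak{l}_B),\Phi(\mathfrak{l}_A,\overline{\mathfrak{l}_B}))\in\{(\mathbf{Y},\mathbf{N}),(\mathbf{N},\mathbf{Y}),(\bot,\bot)\}$ for all $\mathfrak{l}_B$, and symmetrically in $A$; if $\Phi(\mathfrak{l}_A,\mathfrak{Y}_{\mathfrak{E}_B})=\bot$ then for all $\mathfrak{l}_B,\mathfrak{l}'_B$ with $\mathfrak{l}_B\sqcap\mathfrak{l}'_B=\bot_{\mathfrak{E}_B}$, $(\Phi(\mathfrak{l}_A,\mathfrak{l}_B),\Phi(\mathfrak{l}_A,\mathfrak{l}'_B))\in\{(\bot,\mathbf{N}),(\mathbf{N},\bot),(\bot,\bot)\}$, and symmetrically in $A$.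 *)

(* Defs.v *)
From Stdlib Require Import Classical ClassicalEpsilon.

Inductive Bool3 : Type := BY | BN | BBot.

Definition ble (x y : Bool3) : Prop := x = BBot \/ x = y.

Definition bmeet (x y : Bool3) : Bool3 :=
  match x, y with
  | BY, BY => BY
  | BN, BN => BN
  | _, _ => BBot
  end.

Definition bneg (x : Bool3) : Bool3 :=
  match x with BY => BN | BN => BY | BBot => BBot end.

Definition bprod (x y : Bool3) : Bool3 :=
  match x, y with
  | _, BN => BN
  | BN, _ => BN
  | BY, BY => BY
  | _, _ => BBot
  end.

(* Infimum of an arbitrary family in B (meaningful for nonempty families). *)
Definition Binf {I : Type} (f : I -> Bool3) : Bool3 :=
  if excluded_middle_informative (forall i, f i = BY) then BY
  else if excluded_middle_informative (forall i, f i = BN) then BN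
  else BBot.

(* States/Effects Chu space: states, effects, evaluation eps l s = eps_l(s),
   effect negation, the constant-Y effect and the bottom effect. *)
Record SEChu : Type := mkSEChu {
  state : Type;
  effect : Type;
  eps : effect -> state -> Bool3;
  eneg : effect -> effect;
  eY : effect;
  eBot : effect;
  eps_neg : forall l s, eps (eneg l) s = bneg (eps l s);
  eps_Y : forall s, eps eY s = BY;
  eps_Bot : forall s, eps eBot s = BBot
}.

Arguments eps {_} _ _.
Arguments eneg {_} _.
Arguments eY {_}.
Arguments eBot {_}.

Definition is_inf_eff {C : SEChu} {I : Type} (f : I -> effect C) (l : effect C) : Prop :=
  forall s, eps l s = Binf (fun i => eps (f i) s).

Definition meet_is_bot {C : SEChu} (l l' : effect C) : Prop :=
  forall s, bmeet (eps l s) (eps l' s) = BBot.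

Definition bimap (A B : SEChu) : Type := effect A -> effect B -> Bool3.

Definition ple {A B : SEChu} (P Q : bimap A B) : Prop :=
  forall la lb, ble (P la lb) (Q la lb).

Definition in_check {A B : SEChu} (Phi : bimap A B) : Prop :=
  (forall (I : Type) (f : I -> effect A) (l : effect A),
      inhabited I -> is_inf_eff f l ->
      forall lb, Phi l lb = Binf (fun i => Phi (f i) lb)) /\
  (forall (I : Type) (f : I -> effect B) (l : effect B),
      inhabited I -> is_inf_eff f l ->
      forall la, Phi la l = Binf (fun i => Phi la (f i))) /\
  (forall la, Phi (eneg la) eY = bneg (Phi la eY)) /\
  (forall lb, Phi eY (eneg lb) = bneg (Phi eY lb)) /\
  Phi eY eY = BY.

Definition comp_pair (x y : Bool3) : Prop :=
  (x = BY /\ y = BN) \/ (x = BN /\ y = BY) \/ (x = BBot /\ y = BBot).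

Definition bot_pair (x y : Bool3) : Prop :=
  (x = BBot /\ y = BN) \/ (x = BN /\ y = BBot) \/ (x = BBot /\ y = BBot).

Definition in_hat {A B : SEChu} (Phi : bimap A B) : Prop :=
  in_check Phi /\
  (forall la, Phi la (eneg eY) = BN) /\
  (forall lb, Phi (eneg eY) lb = BN) /\
  (forall la, Phi la eY = BY -> forall lb, comp_pair (Phi la lb) (Phi la (eneg lb))) /\
  (forall lb, Phi eY lb = BY -> forall la, comp_pair (Phi la lb) (Phi (eneg la) lb)) /\
  (forall la, Phi la eY = BBot ->
     forall lb lb', meet_is_bot lb lb' -> bot_pair (Phi la lb) (Phi la lb')) /\
  (forall lb, Phi eY lb = BBot ->
     forall la la', meet_is_bot la la' -> bot_pair (Phi la lb) (Phi la' lb)).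

Definition in_tilde {A B : SEChu} (Phi : bimap A B) : Prop :=
  exists (I : Type) (sA : I -> state A) (sB : I -> state B),
    inhabited I /\
    forall la lb, Phi la lb = Binf (fun i => bprod (eps la (sA i)) (eps lb (sB i))).

Definition inf_map {A B : SEChu} {J : Type} (Phi : J -> bimap A B) : bimap A B :=
  fun la lb => Binf (fun j => Phi j la lb).

(* Main.v *)
Require Import Defs.
From Stdlib Require Import Classical ClassicalEpsilon.

Section Aux.

Lemma Binf_spec {I : Type} (f : I -> Bool3) :
  (Binf f = BY /\ (forall i, f i = BY)) \/
  (Binf f = BN /\ ~ (forall i, f i = BY) /\ (forall i, f i = BN)) \/
  (Binf f = BBot /\ ~ (forall i, f i = BY) /\ ~ (forall i, f i = BN)).
Proof.
  unfold Binf.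
  destruct (excluded_middle_informative (forall i, f i = BY)); [left; auto|].
  destruct (excluded_middle_informative (forall i, f i = BN)); right; [left|right]; auto.
Qed.

Lemma BinfY {I : Type} (f : I -> Bool3) : Binf f = BY <-> forall i, f i = BY.
Proof.
  destruct (Binf_spec f) as [[-> H]|[[-> [H1 H2]]|[-> [H1 H2]]]]; split; intros; auto;
    try discriminate; contradiction.
Qed.

Lemma BinfN {I : Type} (f : I -> Bool3) : inhabited I -> (Binf f = BN <-> forall i, f i = BN).
Proof.
  intros [i0].
  destruct (Binf_spec f) as [[-> H]|[[-> [H1 H2]]|[-> [H1 H2]]]]; split; intros; auto;
    try discriminate; try contradiction.
  specialize (H i0); specialize (H0 i0); congruence.
Qed.

Lemma Binf_ext_iff {I J : Type} (f : I -> Bool3) (g : J -> Bool3) :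
  ((forall i, f i = BY) <-> (forall j, g j = BY)) ->
  ((forall i, f i = BN) <-> (forall j, g j = BN)) -> Binf f = Binf g.
Proof.
  intros H1 H2. unfold Binf.
  repeat destruct excluded_middle_informative; first [reflexivity | tauto].
Qed.

Lemma Binf_ext {I : Type} (f g : I -> Bool3) : (forall i, f i = g i) -> Binf f = Binf g.
Proof.
  intro H; apply Binf_ext_iff; split; intros H' i; specialize (H i); specialize (H' i); congruence.
Qed.

Lemma Binf_const {I : Type} (c : Bool3) : inhabited I -> Binf (fun _ : I => c) = c.
Proof.
  intros [i0].
  destruct (Binf_spec (fun _ : I => c)) as [[-> H]|[[-> [H1 H2]]|[-> [H1 H2]]]].
  - symmetry; apply (H i0).
  - symmetry; apply (H2 i0).
  - destruct c; [exfalso; apply H1; auto | exfalso; apply H2; auto | reflexivity].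
Qed.

Lemma Binf_bool (g : bool -> Bool3) : Binf g = bmeet (g true) (g false).
Proof.
  destruct (Binf_spec g) as [[-> H]|[[-> [H1 H2]]|[-> [H1 H2]]]].
  - rewrite (H true), (H false); reflexivity.
  - rewrite (H2 true), (H2 false); reflexivity.
  - destruct (g true) eqn:E1, (g false) eqn:E2; simpl; try reflexivity; exfalso;
    first [solve [apply H1; intros []; auto] | solve [apply H2; intros []; auto]].
Qed.

Lemma Binf_bneg {I : Type} (f : I -> Bool3) : inhabited I -> Binf (fun i => bneg (f i)) = bneg (Binf f).
Proof.
  intros [i0].
  assert (EYN : ~ ((forall i, f i = BY) /\ (forall i, f i = BN))).
  { intros [H1 H2]; specialize (H1 i0); specialize (H2 i0); congruence. }
  assert (EY : (forall i, bneg (f i) = BY) <-> (forall i, f i = BN)).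
  { split; intros H i; specialize (H i); destruct (f i); simpl in *; congruence. }
  assert (EN : (forall i, bneg (f i) = BN) <-> (forall i, f i = BY)).
  { split; intros H i; specialize (H i); destruct (f i); simpl in *; congruence. }
  destruct (Binf_spec f) as [[-> H]|[[-> [H1 H2]]|[-> [H1 H2]]]];
  destruct (Binf_spec (fun i => bneg (f i))) as [[-> G]|[[-> [G1 G2]]|[-> [G1 G2]]]];
  simpl; try reflexivity; tauto.
Qed.

Lemma Binf_comm {I J : Type} (F : I -> J -> Bool3) : inhabited I -> inhabited J ->
  Binf (fun i => Binf (fun j => F i j)) = Binf (fun j => Binf (fun i => F i j)).
Proof.
  intros HI HJ. apply Binf_ext_iff; split.
  - intros H j; apply BinfY; intro i; specialize (H i); rewrite BinfY in H; auto.
  - intros H i; apply BinfY; intro j; specialize (H j); rewrite BinfY in H; auto.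
  - intros H j; apply BinfN; auto; intro i; specialize (H i); rewrite BinfN in H; auto.
  - intros H i; apply BinfN; auto; intro j; specialize (H j); rewrite BinfN in H; auto.
Qed.

Lemma bprod_comm x y : bprod x y = bprod y x.
Proof. destruct x, y; reflexivity. Qed.

Lemma Binf_bprod {I : Type} (f : I -> Bool3) y : inhabited I ->
  bprod (Binf f) y = Binf (fun i => bprod (f i) y).
Proof.
  intro HI. destruct y.
  - rewrite (Binf_ext (fun i => bprod (f i) BY) f); [destruct (Binf f); reflexivity|].
    intro i; destruct (f i); reflexivity.
  - rewrite (Binf_ext (fun i => bprod (f i) BN) (fun _ => BN)); [rewrite Binf_const; auto; destruct (Binf f); reflexivity|].
    intro i; destruct (f i); reflexivity.
  - destruct HI as [i0].
    assert (EN : (forall i, bprod (f i) BBot = BN) <-> (forall i, f i = BN)).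
    { split; intros H i; specialize (H i); destruct (f i); simpl in *; congruence. }
    assert (EY : ~ (forall i, bprod (f i) BBot = BY)).
    { intro H; specialize (H i0); destruct (f i0); discriminate. }
    destruct (Binf_spec f) as [[-> H]|[[-> [H1 H2]]|[-> [H1 H2]]]];
    destruct (Binf_spec (fun i => bprod (f i) BBot)) as [[-> G]|[[-> [G1 G2]]|[-> [G1 G2]]]];
    simpl; try reflexivity; try tauto.
    all: exfalso; specialize (G2 i0); rewrite (H i0) in G2; discriminate.
Qed.

Lemma comp_pair_neg x y : comp_pair x y -> y = bneg x.
Proof. intros [[-> ->]|[[-> ->]|[-> ->]]]; reflexivity. Qed.

Lemma comp_pair_bneg x : comp_pair x (bneg x).
Proof. unfold comp_pair; destruct x; simpl; auto. Qed.

Lemma bot_pair_of x y : x <> BY -> y <> BY -> ~ (x = BN /\ y = BN) -> bot_pair x y.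
Proof. unfold bot_pair; destruct x, y; intros; tauto. Qed.

Lemma meet_bot_neg {C : SEChu} (l : effect C) : meet_is_bot l (eneg l).
Proof. intro s; rewrite eps_neg; destruct (eps l s); reflexivity. Qed.

Lemma meet_bot_bot {C : SEChu} (l : effect C) : meet_is_bot l eBot.
Proof. intro s; rewrite eps_Bot; destruct (eps l s); reflexivity. Qed.

Lemma inf_bool {C : SEChu} (l l' : effect C) : meet_is_bot l l' ->
  is_inf_eff (fun b : bool => if b then l else l') eBot.
Proof.
  intros H s; rewrite eps_Bot, Binf_bool; simpl; symmetry; apply H.
Qed.

Lemma meetB {A B : SEChu} (Phi : bimap A B) : in_check Phi ->
  (forall la, Phi la (eneg eY) = BN) ->
  forall la lb lb', meet_is_bot lb lb' ->
  bmeet (Phi la lb) (Phi la lb') = bmeet (Phi la eY) BN.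
Proof.
  intros [_ [HB _]] HN la lb lb' Hm.
  pose proof (HB bool _ _ (inhabits true) (inf_bool _ _ Hm) la) as E1.
  pose proof (HB bool _ _ (inhabits true) (inf_bool _ _ (meet_bot_neg (@eY B))) la) as E2.
  rewrite Binf_bool in E1, E2; simpl in E1, E2.
  rewrite <- HN with (la := la), <- E1, <- E2; reflexivity.
Qed.

Lemma meetA {A B : SEChu} (Phi : bimap A B) : in_check Phi ->
  (forall lb, Phi (eneg eY) lb = BN) ->
  forall lb la la', meet_is_bot la la' ->
  bmeet (Phi la lb) (Phi la' lb) = bmeet (Phi eY lb) BN.
Proof.
  intros [HA _] HN lb la la' Hm.
  pose proof (HA bool _ _ (inhabits true) (inf_bool _ _ Hm) lb) as E1.
  pose proof (HA bool _ _ (inhabits true) (inf_bool _ _ (meet_bot_neg (@eY A))) lb) as E2.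
  rewrite Binf_bool in E1, E2; simpl in E1, E2.
  rewrite <- HN with (lb := lb), <- E1, <- E2; reflexivity.
Qed.

Lemma L1B {A B : SEChu} (Phi : bimap A B) : in_hat Phi ->
  forall la lb, Phi la lb = BY -> Phi la eY = BY.
Proof.
  intros H la lb E.
  pose proof H as [Hc [HN1 [HN2 [HY1 [HY2 [HB1 HB2]]]]]].
  destruct (Phi la eY) eqn:E0; auto.
  - pose proof (meetB Phi Hc HN1 la lb (eneg lb) (meet_bot_neg lb)) as M.
    rewrite E, E0 in M; destruct (Phi la (eneg lb)); discriminate.
  - pose proof (HB1 la E0 lb eBot (meet_bot_bot lb)) as P.
    rewrite E in P; destruct P as [[? _]|[[? _]|[? _]]]; discriminate.
Qed.

Lemma L1A {A B : SEChu} (Phi : bimap A B) : in_hat Phi ->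
  forall la lb, Phi la lb = BY -> Phi eY lb = BY.
Proof.
  intros H la lb E.
  pose proof H as [Hc [HN1 [HN2 [HY1 [HY2 [HB1 HB2]]]]]].
  destruct (Phi eY lb) eqn:E0; auto.
  - pose proof (meetA Phi Hc HN2 lb la (eneg la) (meet_bot_neg la)) as M.
    rewrite E, E0 in M; destruct (Phi (eneg la) lb); discriminate.
  - pose proof (HB2 lb E0 la eBot (meet_bot_bot la)) as P.
    rewrite E in P; destruct P as [[? _]|[[? _]|[? _]]]; discriminate.
Qed.

Lemma L2B {A B : SEChu} (Phi : bimap A B) : in_hat Phi ->
  forall la lb lb', meet_is_bot lb lb' -> Phi la lb = BN -> Phi la lb' = BN -> Phi la eY = BN.
Proof.
  intros [Hc [HN1 _]] la lb lb' Hm E1 E2.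
  pose proof (meetB Phi Hc HN1 la lb lb' Hm) as M.
  rewrite E1, E2 in M; destruct (Phi la eY); simpl in M; congruence.
Qed.

Lemma L2A {A B : SEChu} (Phi : bimap A B) : in_hat Phi ->
  forall lb la la', meet_is_bot la la' -> Phi la lb = BN -> Phi la' lb = BN -> Phi eY lb = BN.
Proof.
  intros [Hc [_ [HN2 _]]] lb la la' Hm E1 E2.
  pose proof (meetA Phi Hc HN2 lb la la' Hm) as M.
  rewrite E1, E2 in M; destruct (Phi eY lb); simpl in M; congruence.
Qed.

End Aux.

Theorem mainTheorem17 (A B : SEChu) :
  (forall (J : Type) (Phi : J -> bimap A B),
     inhabited J -> (forall j, in_hat (Phi j)) ->
     in_hat (inf_map Phi) /\
     (forall j, ple (inf_map Phi) (Phi j)) /\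
     (forall Psi : bimap A B, in_check Psi -> (forall j, ple Psi (Phi j)) ->
        ple Psi (inf_map Phi))) /\
  (forall Phi : bimap A B, in_tilde Phi -> in_hat Phi).
Proof.
  split.
  - intros J Phi HJ Hh.
    assert (Hc : forall j, in_check (Phi j)) by (intro j; apply (Hh j)).
    split; [|split].
    + split; [split; [|split; [|split; [|split]]]|split; [|split; [|split; [|split; [|split]]]]].
      * intros I f l HI Hinf lb. unfold inf_map.
        transitivity (Binf (fun j => Binf (fun i => Phi j (f i) lb))).
        { apply Binf_ext; intro j; apply (proj1 (Hc j)); auto. }
        apply Binf_comm; auto.
      * intros I f l HI Hinf la. unfold inf_map.
        transitivity (Binf (fun j => Binf (fun i => Phi j la (f i)))).
        { apply Binf_ext; intro j; apply (proj1 (proj2 (Hc j))); auto. }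
        apply Binf_comm; auto.
      * intro la; unfold inf_map.
        rewrite (Binf_ext (fun j => Phi j (eneg la) eY) (fun j => bneg (Phi j la eY))).
        { apply Binf_bneg; auto. }
        intro j; apply (Hc j).
      * intro lb; unfold inf_map.
        rewrite (Binf_ext (fun j => Phi j eY (eneg lb)) (fun j => bneg (Phi j eY lb))).
        { apply Binf_bneg; auto. }
        intro j; apply (Hc j).
      * unfold inf_map; apply BinfY; intro j; apply (Hc j).
      * intro la; unfold inf_map; apply BinfN; auto; intro j; apply (Hh j).
      * intro lb; unfold inf_map; apply BinfN; auto; intro j; apply (Hh j).
      * intros la H lb; unfold inf_map in *. rewrite BinfY in H.
        rewrite (Binf_ext (fun j => Phi j la (eneg lb)) (fun j => bneg (Phi j la lb))).
        { rewrite Binf_bneg; auto; apply comp_pair_bneg. }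
        intro j; apply comp_pair_neg; apply (Hh j); auto.
      * intros lb H la; unfold inf_map in *. rewrite BinfY in H.
        rewrite (Binf_ext (fun j => Phi j (eneg la) lb) (fun j => bneg (Phi j la lb))).
        { rewrite Binf_bneg; auto; apply comp_pair_bneg. }
        intro j; apply comp_pair_neg; apply (Hh j); auto.
      * intros la H lb lb' Hm; unfold inf_map in *. apply bot_pair_of.
        -- intro E; rewrite BinfY in E.
           assert (X : Binf (fun j => Phi j la eY) = BY).
           { apply BinfY; intro j; apply (L1B _ (Hh j) la lb); auto. }
           congruence.
        -- intro E; rewrite BinfY in E.
           assert (X : Binf (fun j => Phi j la eY) = BY).
           { apply BinfY; intro j; apply (L1B _ (Hh j) la lb'); auto. }
           congruence.
        -- intros [E1 E2]; rewrite BinfN in E1, E2 by auto.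
           assert (X : Binf (fun j => Phi j la eY) = BN).
           { apply BinfN; auto; intro j; apply (L2B _ (Hh j) la lb lb'); auto. }
           congruence.
      * intros lb H la la' Hm; unfold inf_map in *. apply bot_pair_of.
        -- intro E; rewrite BinfY in E.
           assert (X : Binf (fun j => Phi j eY lb) = BY).
           { apply BinfY; intro j; apply (L1A _ (Hh j) la lb); auto. }
           congruence.
        -- intro E; rewrite BinfY in E.
           assert (X : Binf (fun j => Phi j eY lb) = BY).
           { apply BinfY; intro j; apply (L1A _ (Hh j) la' lb); auto. }
           congruence.
        -- intros [E1 E2]; rewrite BinfN in E1, E2 by auto.
           assert (X : Binf (fun j => Phi j eY lb) = BN).
           { apply BinfN; auto; intro j; apply (L2A _ (Hh j) lb la la'); auto. }
           congruence.
    + intros j la lb; unfold ble, inf_map.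
      destruct (Binf_spec (fun j => Phi j la lb)) as [[-> H]|[[-> [_ H]]|[-> _]]];
        [right; symmetry; auto | right; symmetry; auto | left; auto].
    + intros Psi _ Hle la lb; unfold ble, inf_map.
      destruct (Psi la lb) eqn:E.
      * right; symmetry; apply BinfY; intro j; destruct (Hle j la lb) as [X|X]; congruence.
      * right; symmetry; apply BinfN; auto; intro j; destruct (Hle j la lb) as [X|X]; congruence.
      * left; auto.
  - intros Phi [I [sA [sB [HI HP]]]].
    split; [split; [|split; [|split; [|split]]]|split; [|split; [|split; [|split; [|split]]]]].
    + intros K f l HK Hinf lb. rewrite HP.
      transitivity (Binf (fun i => Binf (fun k => bprod (eps (f k) (sA i)) (eps lb (sB i))))).
      { apply Binf_ext; intro i; rewrite (Hinf (sA i)); apply Binf_bprod; auto. }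
      rewrite Binf_comm; auto; apply Binf_ext; intro k; rewrite HP; reflexivity.
    + intros K f l HK Hinf la. rewrite HP.
      transitivity (Binf (fun i => Binf (fun k => bprod (eps la (sA i)) (eps (f k) (sB i))))).
      { apply Binf_ext; intro i; rewrite (Hinf (sB i)), bprod_comm, Binf_bprod; auto.
        apply Binf_ext; intro k; apply bprod_comm. }
      rewrite Binf_comm; auto; apply Binf_ext; intro k; rewrite HP; reflexivity.
    + intro la; rewrite !HP, <- Binf_bneg; auto; apply Binf_ext; intro i;
        rewrite eps_neg, eps_Y; destruct (eps la (sA i)); reflexivity.
    + intro lb; rewrite !HP, <- Binf_bneg; auto; apply Binf_ext; intro i;
        rewrite eps_neg, eps_Y; destruct (eps lb (sB i)); reflexivity.
    + rewrite HP; apply BinfY; intro i; rewrite !eps_Y; reflexivity.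
    + intro la; rewrite HP; rewrite (Binf_ext _ (fun _ => BN)); [apply Binf_const; auto|].
      intro i; rewrite eps_neg, eps_Y; destruct (eps la (sA i)); reflexivity.
    + intro lb; rewrite HP; rewrite (Binf_ext _ (fun _ => BN)); [apply Binf_const; auto|].
      intro i; rewrite eps_neg, eps_Y; destruct (eps lb (sB i)); reflexivity.
    + intros la H lb. rewrite HP, BinfY in H.
      assert (HYi : forall i, eps la (sA i) = BY).
      { intro i; specialize (H i); rewrite eps_Y in H; destruct (eps la (sA i)); simpl in H; congruence. }
      rewrite !HP.
      rewrite (Binf_ext (fun i => bprod (eps la (sA i)) (eps (eneg lb) (sB i)))
                        (fun i => bneg (bprod (eps la (sA i)) (eps lb (sB i))))).
      { rewrite Binf_bneg; auto; apply comp_pair_bneg. }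
      intro i; rewrite HYi, eps_neg; destruct (eps lb (sB i)); reflexivity.
    + intros lb H la. rewrite HP, BinfY in H.
      assert (HYi : forall i, eps lb (sB i) = BY).
      { intro i; specialize (H i); rewrite eps_Y in H; destruct (eps lb (sB i)); simpl in H; congruence. }
      rewrite !HP.
      rewrite (Binf_ext (fun i => bprod (eps (eneg la) (sA i)) (eps lb (sB i)))
                        (fun i => bneg (bprod (eps la (sA i)) (eps lb (sB i))))).
      { rewrite Binf_bneg; auto; apply comp_pair_bneg. }
      intro i; rewrite HYi, eps_neg; destruct (eps la (sA i)); reflexivity.
    + intros la H lb lb' Hm. rewrite HP in H.
      assert (nY : ~ forall i, eps la (sA i) = BY).
      { intro X; assert (Binf (fun i => bprod (eps la (sA i)) (eps eY (sB i))) = BY) by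
          (apply BinfY; intro i; rewrite X, eps_Y; reflexivity); congruence. }
      assert (nN : ~ forall i, eps la (sA i) = BN).
      { intro X; assert (Binf (fun i => bprod (eps la (sA i)) (eps eY (sB i))) = BN) by
          (apply BinfN; auto; intro i; rewrite X, eps_Y; reflexivity); congruence. }
      apply bot_pair_of; rewrite ?HP.
      * intro E; rewrite BinfY in E; apply nY; intro i; specialize (E i);
          destruct (eps la (sA i)), (eps lb (sB i)); simpl in E; congruence.
      * intro E; rewrite BinfY in E; apply nY; intro i; specialize (E i);
          destruct (eps la (sA i)), (eps lb' (sB i)); simpl in E; congruence.
      * intros [E1 E2]; rewrite BinfN in E1, E2 by auto; apply nN; intro i;
          specialize (E1 i); specialize (E2 i); specialize (Hm (sB i));
          destruct (eps la (sA i)), (eps lb (sB i)), (eps lb' (sB i)); simpl in *; congruence.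
    + intros lb H la la' Hm. rewrite HP in H.
      assert (nY : ~ forall i, eps lb (sB i) = BY).
      { intro X; assert (Binf (fun i => bprod (eps eY (sA i)) (eps lb (sB i))) = BY) by
          (apply BinfY; intro i; rewrite X, eps_Y; reflexivity); congruence. }
      assert (nN : ~ forall i, eps lb (sB i) = BN).
      { intro X; assert (Binf (fun i => bprod (eps eY (sA i)) (eps lb (sB i))) = BN) by
          (apply BinfN; auto; intro i; rewrite X, eps_Y; reflexivity); congruence. }
      apply bot_pair_of; rewrite ?HP.
      * intro E; rewrite BinfY in E; apply nY; intro i; specialize (E i);
          destruct (eps la (sA i)), (eps lb (sB i)); simpl in E; congruence.
      * intro E; rewrite BinfY in E; apply nY; intro i; specialize (E i);
          destruct (eps la' (sA i)), (eps lb (sB i)); simpl in E; congruence.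
      * intros [E1 E2]; rewrite BinfN in E1, E2 by auto; apply nN; intro i;
          specialize (E1 i); specialize (E2 i); specialize (Hm (sA i));
          destruct (eps lb (sB i)), (eps la (sA i)), (eps la' (sA i)); simpl in *; congruence.
Qed.
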